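(* Let $n>2k\ge2$ be integers and let $J(n,k)$ be the Johnson graph with vertex set $V$ the $k$-subsets of $[n]=\{1,\dots,n\}$, two vertices adjacent iff their intersection has size $k-1$; let $A$ be its adjacency matrix. Let $w_1\neq w_2$ be two vertices, $\gamma>0$, and $H=-\gamma A-|w_1\rangle\langle w_1|-|w_2\rangle\langle w_2|$ on $\mathcal{H}=\mathbb{C}^V$. Let $\mathcal{H}_{\mathrm{inv}}$ be the subspace of vectors $f\in\mathcal{H}$ such that $f(v)=f(v')$ whenever $|v\cap w_1\cap w_2|=|v'\cap w_1\cap w_2|$ and the multisets $\{|v\cap w_1|,|v\cap w_2|\}$ and $\{|v'\cap w_1|,|v'\cap w_2|\}$ coincide. Let $|\lambda\rangle\in\mathcal{H}_{\mathrm{inv}}$ be a nonzero vector with $H|\lambda\rangle=\lambda|\lambda\rangle$, and let $\alpha=\langle w_1|\lambda\rangle$ (which equals $\langle w_2|\lambda\rangle$). Then the following are equivalent: (i) $\lambda\in\sigma(-\gamma A)$; (ii) $-\gamma A|\lambda\rangle=\lambda|\lambda\rangle$; (iii) $\alpha=0$.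
   Context: $\{|v\rangle : v\in V\}$ is the computational basis; $\sigma(U)$ denotes the spectrum of $U$. *)

(* Defs.v *)
From HB Require Import structures.
From mathcomp Require Import all_boot all_order all_algebra.
Set Implicit Arguments. Unset Strict Implicit. Unset Printing Implicit Defensive.
Import Order.TTheory GRing.Theory Num.Theory.
Local Open Scope ring_scope.

Definition kset (n k : nat) := {v : {set 'I_n} | #|v| == k}.

Definition johnson_adj (n k : nat) (v u : kset n k) : bool :=
  #|val v :&: val u| == k.-1.

Definition johnson_A (n k : nat) (C : numClosedFieldType)
  (f : kset n k -> C) : kset n k -> C :=
  fun v => \sum_(u : kset n k | johnson_adj v u) f u.

Definition search_H (n k : nat) (C : numClosedFieldType) (gamma : C)
  (w1 w2 : kset n k) (f : kset n k -> C) : kset n k -> C :=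
  fun v => - gamma * johnson_A f v
           - (v == w1)%:R * f w1 - (v == w2)%:R * f w2.

Definition in_spectrum (T : finType) (C : numClosedFieldType)
  (M : (T -> C) -> (T -> C)) (lam : C) : Prop :=
  exists f : T -> C, (exists v, f v != 0) /\ forall v, M f v = lam * f v.

Definition in_Hinv (n k : nat) (C : numClosedFieldType) (w1 w2 : kset n k)
  (f : kset n k -> C) : Prop :=
  forall v v' : kset n k,
    #|val v :&: val w1 :&: val w2| = #|val v' :&: val w1 :&: val w2| ->
    perm_eq [:: #|val v :&: val w1|; #|val v :&: val w2|]
            [:: #|val v' :&: val w1|; #|val v' :&: val w2|] ->
    f v = f v'.

(* Main.v *)
Require Import Defs.
From HB Require Import structures.
From mathcomp Require Import all_boot all_order all_algebra.
From mathcomp Require Import fingroup perm.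
From mathcomp Require Import zify ring.
Set Implicit Arguments. Unset Strict Implicit. Unset Printing Implicit Defensive.
Import Order.TTheory GRing.Theory Num.Theory.

Lemma card_ord_count n (P : pred nat) :
  #|[set j : 'I_n | P j]| = count P (iota 0 n).
Proof.
rewrite cardE /enum_mem size_filter -val_enum_ord count_map.
rewrite enumT; apply: eq_count => j; by rewrite /= inE.
Qed.

Lemma count_interval a b N : a <= b <= N ->
  count (fun r => (a <= r) && (r < b)) (iota 0 N) = b - a.
Proof.
move=> /andP [hab hbN].
have -> : N = a + (b - a) + (N - b) by lia.
rewrite !iotaD !count_cat add0n.
rewrite (@eq_in_count _ _ pred0); last by move=> r; rewrite mem_iota /=; lia.
rewrite (@eq_in_count _ _ predT (iota a (b - a))); last by move=> r; rewrite mem_iota /=; lia.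
rewrite (@eq_in_count _ _ pred0 (iota (a + (b - a)) _)); last by move=> r; rewrite mem_iota /=; lia.
by rewrite !count_pred0 count_predT size_iota add0n addn0.
Qed.

Lemma count_restrict N n (P : pred nat) : N <= n ->
  count (fun j => (j < N) && P j) (iota 0 n) = count P (iota 0 N).
Proof.
move=> hN; rewrite -(subnKC hN) iotaD count_cat add0n.
rewrite (@eq_in_count _ _ P); last by move=> r; rewrite mem_iota => /andP[_ h]; rewrite add0n in h; rewrite h.
rewrite (@eq_in_count _ _ pred0 (iota N _)); last by move=> r; rewrite mem_iota => /andP[h _]; rewrite ltnNge h.
by rewrite count_pred0 addn0.
Qed.

Lemma count_rot N c (P : pred nat) : 0 < N ->
  count (fun j => P ((j + c) %% N)) (iota 0 N) = count P (iota 0 N).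
Proof.
move=> hN.
rewrite -(count_map (fun j => (j + c) %% N)).
suff hp : perm_eq [seq (j + c) %% N | j <- iota 0 N] (iota 0 N) by move/seq.permP: hp.
have hu : uniq [seq (j + c) %% N | j <- iota 0 N].
  rewrite map_inj_in_uniq ?iota_uniq // => x y; rewrite !mem_iota /= => hx hy.
  move/eqP; rewrite eqn_modDr => /eqP; rewrite !modn_small //; lia.
have hsub : {subset [seq (j + c) %% N | j <- iota 0 N] <= iota 0 N}.
  by move=> x /mapP [j _ ->]; rewrite mem_iota /= ltn_pmod.
have [_ he] := uniq_min_size hu hsub ltac:(by rewrite size_map).
by apply: uniq_perm => //; exact: iota_uniq.
Qed.

Lemma count_shift N k d : 0 < N -> d <= k -> k < N - k ->
  count (fun r => (r < k) && ((r + (N - d)) %% N < k)) (iota 0 N) = k - d.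
Proof.
move=> hN hdk hkN.
rewrite -(@count_interval d k N); last by lia.
apply: eq_in_count => r; rewrite mem_iota /= => hr.
case: (ltnP r d) => hrd.
  rewrite modn_small; last by lia.
  lia.
have -> : r + (N - d) = (r - d) + N by lia.
rewrite modnDr modn_small; last by lia.
lia.
Qed.

Lemma perm_labels (T : finType) (L : eqType) (p : T -> L) : forall m (q : T -> L),
  #|[pred x | q x != p x]| <= m ->
  (forall l, #|[pred x | p x == l]| = #|[pred x | q x == l]|) ->
  exists s : {perm T}, forall x, q (s x) = p x.
Proof.
elim=> [|m IH] q hm hc.
  exists 1%g => x; rewrite perm1; apply/eqP; apply: contraT => hx.
  have : 0 < #|[pred x | q x != p x]| by apply/card_gt0P; exists x.
  by rewrite leqn0 in hm; rewrite (eqP hm).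
case: (pickP [pred x | q x != p x]) => [x hx | h0]; last first.
  exists 1%g => z; rewrite perm1; apply/eqP; have := h0 z; rewrite /= => /negbT.
  by rewrite negbK.
set c := p x.
have [y /andP [hqy hpy]] : exists y, (q y == c) && (p y != c).
  apply/existsP; apply: contraT; rewrite negb_exists => /forallP hall.
  have hsub : [pred z | q z == c] \subset [pred z | p z == c].
    apply/subsetP => z; rewrite !inE => hz; have := hall z; rewrite hz /= negbK.
    by [].
  have /subset_cardP hE := hsub; move: (hE (esym (hc c))) => hEi.
  have : x \in [pred z | q z == c] by rewrite hEi inE.
  by rewrite inE => /eqP hq; move: hx; rewrite inE hq /c eqxx.
have hxy : x != y.
  by apply: contraNneq hpy => <-.
pose t := tperm x y.
have h1 : #|[pred z | q (t z) != p z]| <= m.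
  rewrite -ltnS; apply: leq_trans hm.
  have hx1 : x \in [pred x | q x != p x] by [].
  rewrite (cardD1 x [pred x | q x != p x]) hx1 add1n ltnS.
  apply: subset_leq_card; apply/subsetP => z; rewrite !inE.
  rewrite /t; case: tpermP => [->|->|/eqP hzx /eqP hzy].
  + by rewrite (eqP hqy) /c eqxx.
  + move=> _; rewrite eq_sym hxy /= (eqP hqy) eq_sym; exact: hpy.
  + by rewrite hzx.
have h2 : forall l, #|[pred x | p x == l]| = #|[pred z | q (t z) == l]|.
  move=> l; rewrite hc.
  have -> : #|[pred z | q (t z) == l]| = #|t @^-1: [set z | q z == l]|.
    by apply: eq_card => z; rewrite !inE.
  rewrite card_preimset; last exact: perm_inj.
  by apply: eq_card => z; rewrite !inE.
have [s hs] := IH (fun z => q (t z)) h1 h2.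
by exists (s * t)%g => z; rewrite permM hs.
Qed.

Lemma lab_card (T : finType) (A B : {set T}) b1 b2 :
  #|[pred x | (x \in A, x \in B) == (b1, b2)]| =
  match b1, b2 with
  | true, true => #|A :&: B|
  | true, false => #|A| - #|A :&: B|
  | false, true => #|B| - #|A :&: B|
  | false, false => #|T| - (#|A| + #|B| - #|A :&: B|)
  end.
Proof.
case: b1; case: b2.
- by apply: eq_card => x; rewrite !inE; case: (x \in A); case: (x \in B).
- rewrite -cardsD; apply: eq_card => x; rewrite !inE; by case: (x \in A); case: (x \in B).
- rewrite setIC -cardsD; apply: eq_card => x; rewrite !inE; by case: (x \in A); case: (x \in B).
- rewrite -cardsU -(cardsC (A :|: B)) addKn; apply: eq_card => x; rewrite !inE.
  by case: (x \in A); case: (x \in B).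
Qed.

Lemma perm_sets (T : finType) (X Y Z W : {set T}) :
  #|X| = #|Z| -> #|Y| = #|W| -> #|X :&: Y| = #|Z :&: W| ->
  exists s : {perm T}, s @^-1: Z = X /\ s @^-1: W = Y.
Proof.
move=> h1 h2 h3.
have hc : forall l, #|[pred x | (x \in X, x \in Y) == l]| =
                    #|[pred x | (x \in Z, x \in W) == l]|.
  by case=> [[] []]; rewrite !lab_card ?h1 ?h2 ?h3.
have [s hs] := @perm_labels T _ (fun x => (x \in X, x \in Y)) #|T|
   (fun x => (x \in Z, x \in W)) (max_card _) hc.
exists s; split; apply/setP => x; rewrite inE.
+ exact: (congr1 fst (hs x)).
+ exact: (congr1 snd (hs x)).
Qed.

Local Open Scope ring_scope.

Section J.
Variables (n k : nat) (C : numClosedFieldType).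
Notation V := (kset n k).

Lemma act_proof (s : {perm 'I_n}) (v : V) : #|s @^-1: val v| == k.
Proof. by rewrite card_preimset ?(valP v) //; exact: perm_inj. Qed.

Definition act (s : {perm 'I_n}) (v : V) : V :=
  exist (fun X : {set 'I_n} => #|X| == k) (s @^-1: val v) (act_proof s v).

Lemma act_inj s : injective (act s).
Proof.
move=> v u E; apply: val_inj; apply/setP => x.
have := congr1 (fun A : V => (s^-1)%g x \in val A) E.
by rewrite /= !inE permKV.
Qed.

Lemma adj_act s v u : johnson_adj (act s v) (act s u) = johnson_adj v u.
Proof. by rewrite /johnson_adj /= -preimsetI card_preimset //; exact: perm_inj. Qed.

Lemma A_act s (h : V -> C) v :
  johnson_A (fun u => h (act s u)) v = johnson_A h (act s v).
Proof.
rewrite /johnson_A [RHS](reindex_inj (@act_inj s)) /=.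
by apply: eq_bigl => u; rewrite adj_act.
Qed.

Lemma adj_sym (v u : V) : johnson_adj v u = johnson_adj u v.
Proof. by rewrite /johnson_adj setIC. Qed.

Lemma pairing (f h : V -> C) :
  \sum_v h v * johnson_A f v = \sum_v f v * johnson_A h v.
Proof.
rewrite /johnson_A.
under eq_bigr do rewrite big_distrr big_mkcond /=.
under [RHS]eq_bigr do rewrite big_distrr big_mkcond /=.
rewrite exchange_big; apply: eq_bigr => u _; apply: eq_bigr => v _.
by rewrite adj_sym; case: ifP => // _; rewrite mulrC.
Qed.

Lemma sum_delta (h : V -> C) (w : V) (c : C) :
  \sum_v h v * ((v == w)%:R * c) = h w * c.
Proof.
rewrite (bigD1 w) //= eqxx mul1r big1 ?addr0 // => v /negbTE ->.
by rewrite mul0r mulr0.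
Qed.

End J.

Theorem proposition5 (n k : nat) (hk : (1 <= k)%N) (hn : (2 * k < n)%N)
  (C : numClosedFieldType) (gamma : C) (hgamma : 0 < gamma)
  (w1 w2 : kset n k) (hw : w1 != w2)
  (f : kset n k -> C) (lam : C)
  (hinv : in_Hinv w1 w2 f) (hnz : exists v, f v != 0)
  (heig : forall v, search_H gamma w1 w2 f v = lam * f v) :
  let alpha := f w1 in
  (in_spectrum (fun g : kset n k -> C => fun v => - gamma * johnson_A g v) lam <->
     (forall v, - gamma * johnson_A f v = lam * f v)) /\
  ((forall v, - gamma * johnson_A f v = lam * f v) <-> alpha = 0).
Proof.
move=> alpha.
have hw2 : f w2 = f w1.
  apply: hinv.
    by apply: eq_card => x; rewrite !inE; case: (x \in val w1); case: (x \in val w2).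
  rewrite !setIid setIC (eqP (valP w1)) (eqP (valP w2)).
  by apply/seq.permP => P /=; lia.
have iii_ii : alpha = 0 -> forall v, - gamma * johnson_A f v = lam * f v.
  move=> ha v; have := heig v; rewrite /search_H hw2.
  by rewrite /alpha in ha; rewrite ha !mulr0 !subr0.
have ii_iii : (forall v, - gamma * johnson_A f v = lam * f v) -> alpha = 0.
  move=> hA; have := heig w1; rewrite /search_H hA eqxx (negbTE hw) mul1r mul0r subr0 => E.
  have : f w1 = lam * f w1 - (lam * f w1 - f w1) by ring.
  by rewrite E subrr.
split; last by split.
split; last first.
  by move=> hA; exists f; split.
case=> g [[v0 hv0] hg]; apply: iii_ii; apply/eqP; apply: contraT => ha.
pose eig (h : kset n k -> C) := forall v, - gamma * johnson_A h v = lam * h v.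
have S : forall a b : kset n k -> C, \sum_v a v * (- gamma * johnson_A b v - lam * b v) =
    - gamma * (\sum_v a v * johnson_A b v) - lam * (\sum_v a v * b v).
  move=> a b; rewrite !mulr_sumr -sumrB; apply: eq_bigr => v _; ring.
have key : forall h, eig h -> h w1 + h w2 = 0.
  move=> h hh.
  have hE : forall v, - gamma * johnson_A f v - lam * f v =
      (v == w1)%:R * f w1 + (v == w2)%:R * f w2.
    move=> v; rewrite -heig /search_H; ring.
  have E1 : \sum_v h v * (- gamma * johnson_A f v - lam * f v) = alpha * (h w1 + h w2).
    under eq_bigr do rewrite hE mulrDr.
    rewrite big_split /= !sum_delta hw2 /alpha; ring.
  have E2 : \sum_v h v * (- gamma * johnson_A f v - lam * f v) = 0.
    rewrite S pairing.
    have -> : \sum_v h v * f v = \sum_v f v * h v by apply: eq_bigr => v _; rewrite mulrC.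
    rewrite -S big1 // => v _; by rewrite hh subrr mulr0.
  move: E2; rewrite E1 => /eqP; rewrite mulf_eq0 (negbTE ha) /= => /eqP //.
have eig_act : forall h s, eig h -> eig (fun v => h (act s v)).
  by move=> h s hh v; rewrite A_act; exact: hh.
have pairs : forall X Y : kset n k, #|val X :&: val Y| = #|val w1 :&: val w2| ->
    forall h, eig h -> h X + h Y = 0.
  move=> X Y hXY h hh.
  have [s [hs1 hs2]] := perm_sets (X := val X) (Y := val Y) (Z := val w1) (W := val w2)
     (etrans (eqP (valP X)) (esym (eqP (valP w1))))
     (etrans (eqP (valP Y)) (esym (eqP (valP w2)))) hXY.
  have eX : act s w1 = X by apply: val_inj; exact: hs1.
  have eY : act s w2 = Y by apply: val_inj; exact: hs2.
  by have := key _ (eig_act h s hh); rewrite eX eY.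
(* the odd cycle *)
pose N := (2 * k).+1.
pose m := #|val w1 :&: val w2|.
pose d := (k - m)%N.
have hNn : (N <= n)%N by rewrite /N.
have hN0 : (0 < N)%N by [].
have hmk : (m <= k)%N.
  by rewrite /m; apply: (leq_trans (subset_leq_card (subsetIl _ _))); rewrite (eqP (valP w1)).
have cardY : forall c (Q : pred nat),
    #|[set j : 'I_n | ((j < N) && Q ((j + c) %% N))%N]| = count Q (iota 0 N).
  move=> c Q.
  rewrite (card_ord_count n (fun j => ((j < N) && Q ((j + c) %% N))%N)) count_restrict //.
  exact: (count_rot c Q).
pose Ys (i : nat) := [set j : 'I_n | ((j < N) && ((j + i * (N - d)) %% N < k))%N].
have hYs : forall i, #|Ys i| == k.
  move=> i; rewrite /Ys (cardY _ (fun r => r < k)%N).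
  rewrite (@eq_count _ _ (fun r => (0 <= r) && (r < k))%N) // count_interval ?subn0 //.
  by apply/andP; split => //; rewrite /N; lia.
pose Yk (i : nat) : kset n k := exist (fun X : {set 'I_n} => #|X| == k) (Ys i) (hYs i).
have hint : forall i, #|val (Yk i) :&: val (Yk i.+1)| = m.
  move=> i; rewrite /=.
  have -> : Ys i :&: Ys i.+1 = [set j : 'I_n | ((j < N) &&
      (fun r => (r < k) && ((r + (N - d)) %% N < k)) ((j + i * (N - d)) %% N))%N].
    apply/setP => j; rewrite !inE /=.
    rewrite mulSn (addnC (N - d)%N) addnA -(modnDml (j + i * (N - d))%N).
    by case: (j < N)%N; case: ((j + i * (N - d)) %% N < k)%N.
  rewrite (cardY _ (fun r => (r < k) && ((r + (N - d)) %% N < k))%N).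
  by rewrite count_shift //; rewrite /d /N; lia.
have altern : forall h, eig h -> forall i, h (Yk i) = (-1) ^+ i * h (Yk 0%N).
  move=> h hh; elim=> [|i IH]; first by rewrite expr0 mul1r.
  have := pairs _ _ (hint i) h hh; rewrite IH exprS => E.
  have -> : h (Yk i.+1) = ((-1) ^+ i * h (Yk 0%N) + h (Yk i.+1)) - (-1) ^+ i * h (Yk 0%N) by ring.
  rewrite E; ring.
have hYN : Yk N = Yk 0%N.
  apply: val_inj; apply/setP => j; rewrite /= !inE mul0n addn0 addnC (mulnC N) modnMDl.
  by case hj: (j < N)%N; rewrite //= modn_small.
have zero0 : forall h, eig h -> h (Yk 0%N) = 0.
  move=> h hh; have := altern h hh N.
  rewrite hYN /N exprS exprM expr2 mulrNN mulr1 expr1n mulr1 mulN1r => E.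
  have : h (Yk 0%N) + h (Yk 0%N) = 0 by rewrite {1}E addNr.
  by rewrite -mulr2n -mulr_natl => /eqP; rewrite mulf_eq0 pnatr_eq0 /= => /eqP.
have cv0 : #|val v0| = #|Ys 0%N| by rewrite (eqP (valP v0)) (eqP (hYs 0%N)).
have [s [hs _]] := perm_sets (X := val v0) (Y := val v0) (Z := Ys 0%N) (W := Ys 0%N)
   cv0 cv0 ltac:(by rewrite !setIid).
have e : act s (Yk 0%N) = v0 by apply: val_inj.
have := zero0 _ (eig_act g s hg); rewrite e => hz.
by rewrite hz eqxx in hv0.
Qed.
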